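(* For every bipartition $(\mathbf L,\mathbf R)$ of a finite set $\mathbf A\subset\mathbb{N}^*$, there exists an elementary interval bipartition $(\mathbf L',\mathbf R')$ such that $\boldsymbol\lambda(\mathbf L,\mathbf R)=\boldsymbol\lambda(\mathbf L',\mathbf R')$.
   Context: A bipartition of $\mathbf A$ is an ordered pair $(\mathbf L,\mathbf R)$ with $\mathbf L\cup\mathbf R=\mathbf A$, $\mathbf L\cap\mathbf R=\varnothing$. An interval bipartition is a bipartition of an interval $\{i,i+1,\dots,j\}$ of $\mathbb{N}^*$ (or of $\varnothing$); it is elementary if either $\mathbf L=\mathbf R=\varnothing$, or $1\in\mathbf L$ and $\max(\mathbf L\cup\mathbf R)\in\mathbf R$. For a bipartition $(\mathbf L,\mathbf R)$ of a finite set with $\mathbf L=\{\ell_1<\dots<\ell_p\}$ nonempty, $\boldsymbol\lambda(\mathbf L,\mathbf R)$ is the integer partition with parts $\boldsymbol\lambda(\mathbf L,\mathbf R)_i=\#\{r\in\mathbf R:\ell_i<r\}$, $i=1,\dots,p$ (zero parts discarded); if $\mathbf L=\varnothing$, $\boldsymbol\lambda(\mathbf L,\mathbf R)=(0)$. *)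

(* Defs.v *)
From mathcomp Require Import all_boot all_order finmap.
Set Implicit Arguments. Unset Strict Implicit. Unset Printing Implicit Defensive.
Local Open Scope fset_scope.

Definition bipartition (A L R : {fset nat}) : Prop :=
  L `|` R = A /\ [disjoint L & R].

Definition is_interval (A : {fset nat}) : Prop :=
  A = fset0 \/ exists i j, 0 < i <= j /\ forall x, (x \in A) = (i <= x <= j).

Definition interval_bipartition (L R : {fset nat}) : Prop :=
  is_interval (L `|` R) /\ [disjoint L & R].

Definition elementary (L R : {fset nat}) : Prop :=
  (L = fset0 /\ R = fset0) \/ (1 \in L /\ (\max_(x <- L `|` R) x) \in R).

Definition lambda (L R : {fset nat}) : seq nat :=
  if L == fset0 then [:: 0]
  else [seq k <- [seq #|` [fset r in R | l < r]| | l <- sort leq L] | k != 0].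

(* equality of integer partitions (partitions are identified up to zero parts,
   so that the partition (0) is the empty partition) *)
Definition partition_eq (p q : seq nat) : Prop :=
  [seq k <- p | k != 0] = [seq k <- q | k != 0].

(* Main.v *)
Require Import Defs.
From mathcomp Require Import all_boot all_order finmap.
From mathcomp Require Import zify.


Lemma count_split (T:eqType) (a b : pred T) s :
  count a s = count (predI a b) s + count (predI a (predC b)) s.
Proof. elim: s => //= x s ->; case: (a x); case: (b x) => /=; lia. Qed.



Lemma count_iota_gt a s n : count (fun x => a < x) (iota s n) = (s + n) - maxn s a.+1.
Proof.
elim: n => [|n IH]; first by rewrite /=; lia.
have -> : iota s n.+1 = iota s n ++ [:: s + n] by rewrite -addn1 iotaD.
rewrite count_cat IH /= addn0.
have [h|h] := ltnP a (s + n); rewrite /=; lia.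
Qed.

Lemma card_filt (s : seq nat) (P : pred nat) : uniq s ->
  #|` [fset x in [fset y in s] | P x]%fset| = count P s.
Proof.
move=> us.
have -> : [fset x in [fset y in s] | P x]%fset = [fset x in filter P s]%fset.
  by apply/fsetP => x; rewrite !inE mem_filter andbC.
by rewrite card_fseq undup_id ?filter_uniq // size_filter.
Qed.

Lemma count_filterC (T:eqType) (a b : pred T) s :
  count a [seq x <- s | ~~ b x] = count a s - count a [seq x <- s | b x].
Proof.
suff : count a s = count a [seq x <- s | b x] + count a [seq x <- s | ~~ b x] by lia.
by elim: s => //= x s IH; case: (b x) => /=; case: (a x) => /=; lia.
Qed.

Lemma count_sub (T:eqType) (P : pred T) (s t : seq T) : uniq s -> uniq t ->
  {subset s <= t} -> count P [seq x <- t | x \in s] = count P s.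
Proof.
move=> us ut st.
have : perm_eq (filter (fun x => x \in s) t) s.
  apply: uniq_perm; [exact: filter_uniq | exact: us | move=> x].
  rewrite mem_filter; apply/andP/idP => [[]//|xs]; split => //; exact: st.
by move/permP => ->.
Qed.

Lemma geq_tr : transitive geq.
Proof. by move=> a b c h1 h2; exact: leq_trans h2 h1. Qed.

Lemma construct (s : seq nat) : sorted geq s -> all (fun x => 0 < x) s -> s != [::] ->
 exists L' R' : {fset nat}, interval_bipartition L' R' /\ elementary L' R' /\ lambda L' R' = s.
Proof.
move=> ss pos sn0.
set k := size s. set m := nth 0 s 0.
have k0 : 0 < k by rewrite lt0n size_eq0.
have mono : forall i j, i <= j -> j < k -> nth 0 s j <= nth 0 s i.
  move=> i j ij jk.
  apply: (sorted_leq_nth geq_tr (fun x => leqnn x) 0 ss) => //; rewrite inE //.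
  exact: leq_ltn_trans ij jk.
have pos' : forall i, i < k -> 0 < nth 0 s i.
  by move=> i ik; exact: (allP pos) _ (mem_nth 0 ik).
have mono_all : forall i j, i <= j -> nth 0 s j <= nth 0 s i.
  move=> i j ij; have [jk|kj] := ltnP j k; first exact: mono.
  by rewrite nth_default.
have lem_all : forall i, nth 0 s i <= m by move=> i; exact: mono_all.
pose g i := i.+1 + (m - nth 0 s i).
have gmono : forall i j, (g i < g j) = (i < j).
  move=> i j; rewrite /g; have [ij|ji] := ltnP i j.
    have := mono_all i j (ltnW ij); have := lem_all i; have:= lem_all j; lia.
  apply/negbTE; rewrite -leqNgt.
  have := mono_all j i ji; have := lem_all i; have:= lem_all j; lia.
pose gs := map g (iota 0 k).
pose N := k + m.
have gs_sorted : sorted ltn gs.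
  by apply: homo_sorted (iota_ltn_sorted 0 k) => i j ij; change (g i < g j); rewrite gmono.
have gs_uniq : uniq gs := sorted_uniq ltn_trans ltnn gs_sorted.
pose L' := [fset x in gs]%fset.
pose R' := [fset x in [seq x <- iota 1 N | x \notin gs]]%fset.
have gbound : forall i, i < k -> 1 <= g i < N.
  by move=> i ik; have := pos' i ik; have:=lem_all i; rewrite /g /N; lia.
have Nnot : N \notin gs.
  apply/mapP => -[i]; rewrite mem_iota => /andP[_ ik] e.
  by have := gbound i ik; rewrite -e ltnn andbF.
have memU : forall x, (x \in (L' `|` R')%fset) = (1 <= x <= N).
  move=> x; rewrite !inE mem_filter mem_iota add1n ltnS.
  case xg: (x \in gs) => //=.
  move: xg => /mapP [i]; rewrite mem_iota => /andP[_ ik] ->.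
  by move/andP: (gbound i ik) => [h1 h2]; rewrite h1 /= ltnW.
exists L', R'; split; [split|split].
- right; exists 1, N; split; last exact: memU.
  by rewrite /N; apply/andP; split => //; lia.
- by apply/fdisjointP => x; rewrite !inE mem_filter => ->.
- right; split.
    rewrite inE; apply/mapP; exists 0; first by rewrite mem_iota.
    by rewrite /g subnn.
  have -> : \max_(x <- (L' `|` R')%fset) x = N.
    apply/eqP; rewrite eqn_leq; apply/andP; split.
      by apply/bigmax_leqP_seq => x; rewrite memU => /andP[].
    by apply: leq_bigmax_seq => //; rewrite memU /N; apply/andP; split => //; lia.
  by rewrite inE mem_filter Nnot mem_iota /=; lia.
rewrite /lambda.
have -> : (L' == fset0) = false.
  apply/negbTE/negP => /eqP/fsetP /(_ (g 0)); rewrite !inE.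
  by rewrite (map_f g) // mem_iota.
have -> : sort leq L' = gs.
  rewrite -(sorted_sort leq_trans (sub_sorted ltnW gs_sorted)).
  apply/perm_sortP; [exact: leq_total | exact: leq_trans | exact: anti_leq |].
  apply: uniq_perm; [exact: fset_uniq | exact: gs_uniq | move=> x].
  by rewrite -[x \in (L' : seq nat)]/(x \in L') inE.
have -> : [seq #|` [fset r in R' | l < r]%fset| | l <- gs] = s.
  rewrite -[RHS](mkseq_nth 0 s) /mkseq /gs -map_comp; apply/eq_in_map => i.
  rewrite mem_iota => /andP[_ ik] /=.
  rewrite card_filt; last by rewrite filter_uniq // iota_uniq.
  rewrite (@count_filterC _ _ (fun x => x \in gs)) (@count_sub _ _ gs (iota 1 N) gs_uniq (iota_uniq 1 N)); last first.
    move=> x /mapP [j]; rewrite mem_iota => /andP[_ jk] ->.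
    by rewrite mem_iota add1n ltnS; move/andP: (gbound j jk) => [h1 h2]; rewrite h1 ltnW.
  rewrite count_iota_gt /gs count_map.
  under eq_count => j do rewrite /= gmono.
  rewrite count_iota_gt.
  have := pos' i ik; have := lem_all i; rewrite /g /N; lia.
apply/all_filterP; apply/allP => x /(allP pos); by rewrite lt0n.
Qed.

Local Open Scope fset_scope.

Theorem lemma3p10 (A L R : {fset nat}) :
  0 \notin A -> bipartition A L R ->
  exists L' R' : {fset nat},
    interval_bipartition L' R' /\ elementary L' R' /\
    partition_eq (lambda L R) (lambda L' R').
Proof.
move=> _ _.
set mu := [seq k <- lambda L R | k != 0%N].
have smu : sorted geq mu.
  rewrite /mu /lambda; case: ifP => _; first by [].
  apply: (sorted_filter geq_tr); apply: (sorted_filter geq_tr).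
  apply: homo_sorted; last exact: (sort_sorted leq_total).
  move=> x y xy; apply: fsubset_leq_card; apply/fsubsetP => r.
  rewrite !inE => /andP[rR yr]; rewrite rR /=; exact: leq_ltn_trans xy yr.
have posmu : all (fun x => 0 < x)%N mu.
  by rewrite /mu; apply/allP => x; rewrite mem_filter lt0n => /andP[].
case: (eqVneq mu [::]) => [mu0 | mun0].
  exists fset0, fset0; split; [split|split].
  - by left; apply/fsetP => x; rewrite !inE.
  - by apply/fdisjointP => x; rewrite inE.
  - by left.
  by rewrite /partition_eq -/mu mu0 /lambda eqxx.
have [L' [R' [h1 [h2 h3]]]] := construct _ smu posmu mun0.
exists L', R'; split => //; split => //.
rewrite /partition_eq -/mu h3; apply/esym/all_filterP.
by apply/allP => x /(allP posmu); rewrite lt0n.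
Qed.
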